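(* Let $Y,\widetilde Y\in\mathbb{R}^{m\times N}$ with nonzero columns $\widetilde Y_t$, $w\in\mathbb{R}^N$, $r\in\mathbb Z^+$. Run the $r$-th order data alignment: $\hat u_0=0$; for $t=1,\dots,N$, $\widetilde w_t=\langle\widetilde Y_t,\hat u_{t-1}+w_tY_t\rangle/\|\widetilde Y_t\|_2^2$ and $\hat u_t=\hat u_{t-1}+w_tY_t-\widetilde w_t\widetilde Y_t$; for $t=N+1,\dots,rN$ (with subscripts of $w,\widetilde w,Y,\widetilde Y$ taken modulo $N$, in $\{1,\dots,N\}$, and $\widetilde w_t$ on the right of the first line being its current value), $\hat v_{t-1}=\hat u_{t-1}-w_tY_t+\widetilde w_t\widetilde Y_t$, then $\widetilde w_t\leftarrow\langle\widetilde Y_t,\hat v_{t-1}+w_tY_t\rangle/\|\widetilde Y_t\|_2^2$, and $\hat u_t=\hat v_{t-1}+w_tY_t-\widetilde w_t\widetilde Y_t$. Then $$\hat u_N=\sum_{j=1}^N w_j\,P_{\widetilde Y_N^\perp}\cdots P_{\widetilde Y_{j+1}^\perp}P_{\widetilde Y_j^\perp}(Y_j)\quad\text{and}\quad \hat u_{rN}=P^{r-1}\hat u_N,$$ where $P:=P_{\widetilde Y_N^\perp}\cdots P_{\widetilde Y_2^\perp}P_{\widetilde Y_1^\perp}$. Moreover $\hat u_{rN}=Yw-\widetilde Y\widetilde w$ for the final vector $\widetilde w$.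
   Context: For nonzero $z\in\mathbb R^m$, $P_{z^\perp}=I-zz^\top/\|z\|_2^2$ is the orthogonal projection onto $\mathrm{span}(z)^\perp$. Columns of a matrix $A$ are denoted $A_j$. *)

(* Defs.v *)
From HB Require Import structures.
From mathcomp Require Import all_boot all_order all_algebra.
Set Implicit Arguments. Unset Strict Implicit. Unset Printing Implicit Defensive.
Import Order.TTheory GRing.Theory Num.Theory.
Local Open Scope ring_scope.

Section DataAlignment.
Variable R : realFieldType.

Definition dotv (m : nat) (a b : 'cV[R]_m) : R := (a^T *m b) 0 0.

Definition proj_perp (m : nat) (z : 'cV[R]_m) : 'M[R]_m :=
  1%:M - (dotv z z)^-1 *: (z *m z^T).

Definition set_entry (N : nat) (v : 'cV[R]_N) (j : 'I_N) (c : R) : 'cV[R]_N :=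
  \col_i (if i == j then c else v i 0).

Variables (m N : nat) (Y Yt : 'M[R]_(m, N)) (w : 'cV[R]_N).

(* The state is (u_hat, w_tilde).  Column j (0-based) is column j+1 of the paper. *)

Definition align_step1 (s : 'cV[R]_m * 'cV[R]_N) (j : 'I_N) :=
  let: (u, wt) := s in
  let a := u + w j 0 *: col j Y in
  let c := dotv (col j Yt) a / dotv (col j Yt) (col j Yt) in
  (a - c *: col j Yt, set_entry wt j c).

(* step t > N of the alignment (later passes), j = t mod N *)
Definition align_step2 (s : 'cV[R]_m * 'cV[R]_N) (j : 'I_N) :=
  let: (u, wt) := s in
  let v := u - w j 0 *: col j Y + wt j 0 *: col j Yt in
  let a := v + w j 0 *: col j Y in
  let c := dotv (col j Yt) a / dotv (col j Yt) (col j Yt) in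
  (a - c *: col j Yt, set_entry wt j c).

Definition align_pass1 s := foldl align_step1 s (enum 'I_N).
Definition align_pass2 s := foldl align_step2 s (enum 'I_N).

Definition align_N : 'cV[R]_m * 'cV[R]_N := align_pass1 (0, 0).

(* state (u_hat_{rN}, w_tilde) after t = 1..rN (r >= 1) *)
Definition align_rN (r : nat) : 'cV[R]_m * 'cV[R]_N :=
  iter r.-1 align_pass2 align_N.

(* P_{Yt_N^perp} ... P_{Yt_{j+1}^perp} P_{Yt_j^perp} (1-based j), i.e. the
   product over the 0-based indices i >= j, later indices on the left. *)
Definition proj_chain (j : 'I_N) : 'M[R]_m :=
  foldl (fun M i => proj_perp (col i Yt) *m M) 1%:M
        [seq i <- enum 'I_N | (j <= nat_of_ord i)%N].

Definition proj_full : 'M[R]_m :=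
  foldl (fun M i => proj_perp (col i Yt) *m M) 1%:M (enum 'I_N).

End DataAlignment.

(* Main.v *)
Require Import Defs.
From HB Require Import structures.
From mathcomp Require Import all_boot all_order all_algebra.
Import Order.TTheory GRing.Theory Num.Theory.
Local Open Scope ring_scope.

Section S.
Variable R : realFieldType.

Lemma proj_perpE m (z a : 'cV[R]_m) :
  proj_perp z *m a = a - (dotv z a / dotv z z) *: z.
Proof.
rewrite /proj_perp mulmxBl mul1mx -scalemxAl -mulmxA.
rewrite [z^T *m a]mx11_scalar mul_mx_scalar scalerA mulrC.
done.
Qed.

Lemma dotv_neq0 m (z : 'cV[R]_m) : z != 0 -> dotv z z != 0.
Proof.
move=> hz; apply/negP => /eqP h; move/negP: hz; apply; apply/eqP.
have : \sum_(i < m) z i 0 * z i 0 = dotv z z.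
  by rewrite /dotv mxE; apply: eq_bigr => i _; rewrite mxE.
rewrite h.
move/psumr_eq0P => H; apply/matrixP => i j; rewrite ord1 mxE.
have /eqP := H (fun i _ => (sqr_ge0 (z i 0))) i isT; rewrite mulf_eq0 orbb => /eqP //.
Qed.

Lemma proj_perp_self m (z : 'cV[R]_m) : z != 0 -> proj_perp z *m z = 0.
Proof. by move=> hz; rewrite proj_perpE divff ?dotv_neq0 // scale1r subrr. Qed.

Variables (m N : nat) (Y Yt : 'M[R]_(m, N)) (w : 'cV[R]_N).
Hypothesis hYt : forall j : 'I_N, col j Yt != 0.

Let PM := fun (M : 'M[R]_m) (i : 'I_N) => proj_perp (col i Yt) *m M.

Lemma step1_fst u wt j :
  (align_step1 Y Yt w (u, wt) j).1 = proj_perp (col j Yt) *m (u + w j 0 *: col j Y).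
Proof. by rewrite /= proj_perpE. Qed.

Lemma step2_fst u wt j :
  (align_step2 Y Yt w (u, wt) j).1 = proj_perp (col j Yt) *m u.
Proof.
rewrite /= (addrAC (u - _)) subrK -proj_perpE.
by rewrite mulmxDr -scalemxAr proj_perp_self // scaler0 addr0.
Qed.

Lemma pass2_fst s u wt :
  (foldl (align_step2 Y Yt w) (u, wt) s).1 = foldl PM 1%:M s *m u.
Proof.
elim/last_ind: s => [|s j IH]; first by rewrite mul1mx.
rewrite !foldl_rcons; case E: (foldl _ _ s) => [u' wt'].
by rewrite step2_fst /PM -mulmxA -IH E.
Qed.

Lemma pass2_inv s u wt : u = Y *m w - Yt *m wt ->
  let st := foldl (align_step2 Y Yt w) (u, wt) s in st.1 = Y *m w - Yt *m st.2.
Proof.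
move=> H; elim/last_ind: s => [|s j IH] //=.
rewrite !foldl_rcons; move: IH; case: (foldl _ _ s) => [u' wt'] /= ->.
set c := (_ / _).
have -> : set_entry wt' j c = wt' + (c - wt' j 0) *: delta_mx j 0.
  apply/matrixP => i k; rewrite !mxE ord1 eqxx andbT.
  by case: eqP => [->|_]; rewrite ?mulr1 ?mulr0 ?addr0 // addrC subrK.
rewrite mulmxDr -scalemxAr -colE scalerBl.
by rewrite (addrAC (_ - w j 0 *: _)) subrK opprD opprB !addrA.
Qed.

Let restr (s : seq 'I_N) : 'cV[R]_N := \col_i (if i \in s then w i 0 else 0).

Lemma pass1_inv s : uniq s ->
  let st := foldl (align_step1 Y Yt w) (0, 0) s in
  st.1 = Y *m restr s - Yt *m st.2 /\ forall i, i \notin s -> st.2 i 0 = 0.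
Proof.
elim/last_ind: s => [|s j IH].
  move=> _ /=; split; last by move=> i _; rewrite mxE.
  have -> : restr [::] = 0 by apply/matrixP => i k; rewrite !mxE.
  by rewrite !mulmx0 subrr.
rewrite rcons_uniq => /andP [js us].
rewrite !foldl_rcons; move: (IH us); case: (foldl _ _ s) => [u' wt'] /= [-> H0].
set c := (_ / _).
have E1 : set_entry wt' j c = wt' + c *: delta_mx j 0.
  apply/matrixP => i k; rewrite !mxE ord1 eqxx andbT.
  case: eqP => [->|_]; rewrite ?mulr1 ?mulr0 ?addr0 //.
  by rewrite H0 // add0r.
have E2 : restr (rcons s j) = restr s + w j 0 *: delta_mx j 0.
  apply/matrixP => i k; rewrite !mxE ord1 eqxx andbT mem_rcons in_cons.
  case: eqP => [->|_]; rewrite ?mulr1 ?mulr0 ?addr0 //=.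
  by rewrite (negbTE js) add0r.
split.
  rewrite E1 E2 !mulmxDr -!scalemxAr -!colE.
  by rewrite opprD !addrA (addrAC (_ *m restr s)).
move=> i; rewrite mem_rcons in_cons negb_or => /andP [ij iS].
by rewrite mxE (negbTE ij) H0.
Qed.

Lemma restr_enum : restr (enum 'I_N) = w.
Proof. by apply/matrixP => i k; rewrite !mxE mem_enum ord1. Qed.

Let chainS (s : seq 'I_N) (j : 'I_N) := foldl PM 1%:M [seq i <- s | (j <= nat_of_ord i)%N].

Lemma pass1_fst s : pairwise (fun a b : 'I_N => (a < b)%N) s ->
  (foldl (align_step1 Y Yt w) (0, 0) s).1
   = \sum_(j <- s) w j 0 *: (chainS s j *m col j Y).
Proof.
elim/last_ind: s => [|s k IH]; first by rewrite big_nil.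
rewrite pairwise_rcons => /andP [/allP alls ps].
rewrite foldl_rcons; move: (IH ps); case: (foldl _ _ s) => [u' wt'] /= Hu.
rewrite -proj_perpE Hu big_rcons /= mulmxDr -scalemxAr.
congr (_ + _).
  rewrite mulmx_sumr; apply: eq_big_seq => j js.
  rewrite /chainS filter_rcons ltnW ?alls // foldl_rcons /PM.
  by rewrite -scalemxAr mulmxA.
rewrite /chainS filter_rcons leqnn.
rewrite (@eq_in_filter _ _ pred0); last first.
  by move=> x xs; rewrite /= leqNgt alls.
by rewrite filter_pred0 /= /PM mulmx1.
Qed.

Lemma pairwise_enum : pairwise (fun a b : 'I_N => (a < b)%N) (enum 'I_N).
Proof.
rewrite -(pairwise_map val (fun a b => (a < b)%N)) val_enum_ord.
by rewrite -sorted_pairwise ?iota_ltn_sorted //; apply: ltn_trans.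
Qed.
End S.

Theorem mainTheorem3 (R : realFieldType) (m N : nat)
  (Y Yt : 'M[R]_(m, N)) (w : 'cV[R]_N) (r : nat)
  (hr : (0 < r)%N) (hYt : forall j : 'I_N, col j Yt != 0) :
  (align_N Y Yt w).1
    = \sum_(j < N) w j 0 *: (proj_chain Yt j *m col j Y)
  /\ (align_rN Y Yt w r).1
    = iter r.-1 (mulmx (proj_full Yt)) (align_N Y Yt w).1
  /\ (align_rN Y Yt w r).1 = Y *m w - Yt *m (align_rN Y Yt w r).2.
Proof.
split.
  rewrite /align_N /align_pass1 pass1_fst ?pairwise_enum //.
  by rewrite big_enum.
rewrite /align_rN; split.
  elim: r.-1 => [|n IH] //=.
  rewrite -IH; case: (iter n _ _) => u wt.
  by rewrite /align_pass2 pass2_fst.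
have H0 : (align_N Y Yt w).1 = Y *m w - Yt *m (align_N Y Yt w).2.
  have [H _] := @pass1_inv R m N Y Yt w _ (enum_uniq 'I_N).
  by rewrite /align_N /align_pass1 H restr_enum.
elim: r.-1 => [|n IH] //=.
move: IH; case: (iter n _ _) => u wt IH.
exact: pass2_inv.
Qed.
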